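(* Let ${\tt D}=({\tt M},{\tt C},\equiv,\underline{\cdot})$ be a reflective distillery whose calculus is deterministic, and let $s$ be an initial state. For every derivation $d:\underline{s}\multimap^* t$ there is an execution $\rho: s\to^* s'$ such that $t\equiv\underline{s'}$, $|\rho|_{\mathtt m}=|d|_{\mathtt m}$, $|\rho|_{\mathtt e}=|d|_{\mathtt e}$ and $|\rho|_{\mathtt p}=|d|$.
   Context: A distillery ${\tt D}=({\tt M},{\tt C},\equiv,\underline{\cdot})$ consists of: (1) an abstract machine ${\tt M}$: a deterministic labelled transition system $\to$ on states, with initial states (in bijection with closed $\lambda$-terms; states reachable from initial ones are reachable) and a partition of transitions into commutative ($\to_{\mathtt c}$) and principal ones, the latter partitioned into multiplicative ($\to_{\mathtt m}$) and exponential ($\to_{\mathtt e}$); (2) a calculus ${\tt C}$ given by rewriting relations $\multimap_{\mathtt m},\multimap_{\mathtt e}$ on terms, $\multimap:=\multimap_{\mathtt m}\cup\multimap_{\mathtt e}$; (3) an equivalence $\equiv$ on terms that is a strong bisimulation: for $\mathtt x\in\{\mathtt m,\mathtt e\}$, $t\equiv u$ and $t\multimap_{\mathtt x}t'$ imply $u\multimap_{\mathtt x}u'$ for some $u'\equiv t'$; (4) a decoding $\underline{\cdot}$ from states to terms such that on reachable states: $s\to_{\mathtt c}s'$ implies $\underline{s}\equiv\underline{s'}$; $s\to_{\mathtt m}s'$ implies $\underline{s}\multimap_{\mathtt m}t\equiv\underline{s'}$ for some $t$; $s\to_{\mathtt e}s'$ implies $\underline{s}\multimap_{\mathtt e}t\equiv\underline{s'}$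 for some $t$. Reflective: (Termination) $\to_{\mathtt c}$ terminates on reachable states; (Progress) if $s$ is reachable, no $\to_{\mathtt c}$ transition applies to $s$, and $\underline{s}\multimap_{\mathtt x}t$ with $\mathtt x\in\{\mathtt m,\mathtt e\}$, then $s\to_{\mathtt x}s'$ for some $s'$. The calculus is deterministic if every term $t$ admits at most one pair $(\mathtt x,u)$ with $t\multimap_{\mathtt x}u$. An execution is a sequence of transitions from an initial state; $|\rho|_{\mathtt m},|\rho|_{\mathtt e},|\rho|_{\mathtt p}$ count multiplicative, exponential and principal transitions of $\rho$; for a derivation $d$, $|d|$ is its length and $|d|_{\mathtt m},|d|_{\mathtt e}$ count its $\multimap_{\mathtt m}$ and $\multimap_{\mathtt e}$ steps. *)

(* Defs.v *)
From Stdlib Require Import List RelationClasses.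
Import ListNotations.
Set Implicit Arguments.

Inductive lterm : Type :=
| LVar : nat -> lterm
| LAbs : lterm -> lterm
| LApp : lterm -> lterm -> lterm.

Fixpoint lclosed_at (n : nat) (t : lterm) : Prop :=
  match t with
  | LVar k => k < n
  | LAbs u => lclosed_at (S n) u
  | LApp u v => lclosed_at n u /\ lclosed_at n v
  end.

Definition closed_lterm := { t : lterm | lclosed_at 0 t }.

(* Kinds of machine transitions: commutative, multiplicative, exponential. *)
Inductive mlabel : Type := Lc | Lm | Le.
(* Kinds of calculus steps: multiplicative, exponential. *)
Inductive rkind : Type := Km | Ke.

Definition label_of_kind (x : rkind) : mlabel :=
  match x with Km => Lm | Ke => Le end.

Record Distillery : Type := {
  State : Type;
  step : State -> mlabel -> State -> Prop;
  step_det : forall s l1 s1 l2 s2, step s l1 s1 -> step s l2 s2 -> l1 = l2 /\ s1 = s2;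
  initial : State -> Prop;
  load : closed_lterm -> State;
  load_inj : forall t u, load t = load u -> t = u;
  initial_load : forall s, initial s <-> exists t, load t = s;
  Term : Type;
  red : rkind -> Term -> Term -> Prop;
  equiv : Term -> Term -> Prop;
  equiv_Equivalence : Equivalence equiv;
  equiv_bisim : forall x t u t', equiv t u -> red x t t' ->
      exists u', red x u u' /\ equiv t' u';
  decode : State -> Term
}.

Inductive reachable (D : Distillery) : State D -> Prop :=
| reach_init : forall s, initial D s -> reachable D s
| reach_step : forall s l s', reachable D s -> step D s l s' -> reachable D s'.

Definition decoding_ok (D : Distillery) : Prop :=
  (forall s s', reachable D s -> step D s Lc s' -> equiv D (decode D s) (decode D s')) /\
  (forall x s s', reachable D s -> step D s (label_of_kind x) s' ->
      exists t, red D x (decode D s) t /\ equiv D t (decode D s')).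

Definition is_distillery (D : Distillery) : Prop := decoding_ok D.

Definition reflective (D : Distillery) : Prop :=
  (forall s, reachable D s -> Acc (fun s2 s1 => step D s1 Lc s2) s) /\
  (forall s x t, reachable D s -> (forall s', ~ step D s Lc s') ->
      red D x (decode D s) t -> exists s', step D s (label_of_kind x) s').

Definition calculus_deterministic (D : Distillery) : Prop :=
  forall t x1 u1 x2 u2, red D x1 t u1 -> red D x2 t u2 -> x1 = x2 /\ u1 = u2.

Inductive derivation (D : Distillery) : Term D -> Term D -> list rkind -> Prop :=
| der_refl : forall t, derivation D t t []
| der_step : forall x t u v ks, red D x t u -> derivation D u v ks ->
    derivation D t v (x :: ks).

Inductive run (D : Distillery) : State D -> State D -> list mlabel -> Prop :=
| run_refl : forall s, run D s s []
| run_step : forall l s s1 s2 ls, step D s l s1 -> run D s1 s2 ls ->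
    run D s s2 (l :: ls).

Definition execution (D : Distillery) (s s' : State D) (ls : list mlabel) : Prop :=
  initial D s /\ run D s s' ls.

Definition is_principal (l : mlabel) : bool :=
  match l with Lc => false | _ => true end.
Definition mlabel_eqb (a b : mlabel) : bool :=
  match a, b with Lc, Lc | Lm, Lm | Le, Le => true | _, _ => false end.
Definition rkind_eqb (a b : rkind) : bool :=
  match a, b with Km, Km | Ke, Ke => true | _, _ => false end.

Definition exec_m (ls : list mlabel) : nat := length (filter (mlabel_eqb Lm) ls).
Definition exec_e (ls : list mlabel) : nat := length (filter (mlabel_eqb Le) ls).
Definition exec_p (ls : list mlabel) : nat := length (filter is_principal ls).
Definition der_m (ks : list rkind) : nat := length (filter (rkind_eqb Km) ks).
Definition der_e (ks : list rkind) : nat := length (filter (rkind_eqb Ke) ks).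

(* Main.v *)
Require Import Defs.
From Stdlib Require Import List Classical RelationClasses Lia.
Import ListNotations.

Lemma run_reach (D : Distillery) s s' ls : run D s s' ls -> reachable D s -> reachable D s'.
Proof. induction 1; intros; auto. apply IHrun. eapply reach_step; eauto. Qed.

Lemma run_app (D : Distillery) s1 s2 s3 l1 l2 :
  run D s1 s2 l1 -> run D s2 s3 l2 -> run D s1 s3 (l1 ++ l2).
Proof. induction 1; intros; simpl; auto. econstructor; eauto. Qed.

Lemma normalize (D : Distillery) : is_distillery D -> reflective D ->
  forall s, reachable D s -> exists s0 n, run D s s0 (repeat Lc n) /\
    (forall s', ~ step D s0 Lc s') /\ equiv D (decode D s) (decode D s0).
Proof.
  intros Hd [Ht _] s Hr. pose proof (equiv_Equivalence D) as HE.
  induction (Ht s Hr) as [s _ IH].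
  destruct (classic (exists s', step D s Lc s')) as [[s1 H1]|Hn].
  - destruct (IH s1 H1 (reach_step _ _ Hr H1)) as (s0 & n & R & N & E).
    exists s0, (S n). split; [econstructor; eauto|]. split; auto.
    destruct Hd as [Hc _]. eapply (Equivalence_Transitive _ (decode D s1)); eauto.
  - exists s, 0. split; [constructor|]. split.
    + intros s' H; apply Hn; eauto.
    + reflexivity.
Qed.

Lemma filt_rep (f : mlabel -> bool) n : f Lc = false -> filter f (repeat Lc n) = [].
Proof. intros H; induction n; simpl; auto. rewrite H; auto. Qed.

Lemma gen (D : Distillery) : is_distillery D -> reflective D -> calculus_deterministic D ->
  forall u t ks, derivation D u t ks -> forall s, reachable D s -> equiv D u (decode D s) ->
  exists s' ls, run D s s' ls /\ equiv D t (decode D s') /\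
      exec_m ls = der_m ks /\ exec_e ls = der_e ks /\ exec_p ls = length ks.
Proof.
  intros Hd Hrf Hdet. pose proof (equiv_Equivalence D) as HE.
  induction 1 as [t|x t u v ks Hred Hder IH]; intros s Hr Heq.
  - exists s, []. repeat split; auto. constructor.
  - destruct (normalize D Hd Hrf s Hr) as (s0 & n & R & N & E).
    assert (Hr0 : reachable D s0) by (eapply run_reach; [exact R|exact Hr]).
    assert (E0 : equiv D t (decode D s0)) by (eapply (Equivalence_Transitive _ (decode D s)); eauto).
    destruct (equiv_bisim D _ _ _ _ E0 Hred) as (w & Hw & Ew).
    destruct Hrf as [_ Hp].
    destruct (Hp s0 x w Hr0 N Hw) as [s1 Hs1].
    destruct Hd as [_ Hpr].
    destruct (Hpr x s0 s1 Hr0 Hs1) as (t' & Ht' & Et').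
    destruct (Hdet _ _ _ _ _ Hw Ht') as [_ ->].
    assert (Hr1 : reachable D s1) by (eapply reach_step; [exact Hr0| exact Hs1]).
    destruct (IH s1 Hr1 (Equivalence_Transitive _ _ _ Ew Et')) as (s' & ls & R' & E' & Cm & Ce & Cp).
    exists s', (repeat Lc n ++ label_of_kind x :: ls).
    split; [eapply run_app; eauto; econstructor; eauto|]. split; auto.
    unfold exec_m, exec_e, exec_p, der_m, der_e in *.
    rewrite !filter_app, !filt_rep by reflexivity. simpl.
    destruct x; simpl; rewrite ?Cm, ?Ce, ?Cp; auto.
Qed.

Theorem mainTheorem5 :
  forall D : Distillery,
    is_distillery D -> reflective D -> calculus_deterministic D ->
    forall (s : State D), initial D s ->
    forall (t : Term D) (ks : list rkind), derivation D (decode D s) t ks ->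
    exists (s' : State D) (ls : list mlabel),
      execution D s s' ls /\
      equiv D t (decode D s') /\
      exec_m ls = der_m ks /\
      exec_e ls = der_e ks /\
      exec_p ls = length ks.
Proof.
  intros D Hd Hr Hdet s Hi t ks Hder.
  pose proof (equiv_Equivalence D) as HE.
  destruct (gen D Hd Hr Hdet _ _ _ Hder s (reach_init _ _ Hi) (Equivalence_Reflexive _)) as (s' & ls & R & H).
  exists s', ls. split; [split; auto| exact H].
Qed.
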